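(* Let $K$ be a field, $A=\{\alpha_1,\dots,\alpha_m\}\subset K$ and $B=\{\beta_1,\dots,\beta_n\}\subset K$ finite sets with $|A|=m$, $|B|=n$, $f=\prod_{i=1}^m(x-\alpha_i)$, $g=\prod_{j=1}^n(x-\beta_j)$. Let $0\le d\le n-1$ with $d\le m$. Then $$\operatorname{Syl}_{0,d}(A,B)=\operatorname{Sres}_d(f,g).$$
   Context: For finite sets $Y,Z$, $\mathcal{R}(Y,Z):=\prod_{y\in Y,z\in Z}(y-z)$ (equal to $1$ if $Y$ or $Z$ is empty), and $\mathcal{R}(x,Z):=\mathcal{R}(\{x\},Z)$. For $0\le p\le m$, $0\le q\le n$, $$\operatorname{Syl}_{p,q}(A,B)(x):=\sum_{\substack{A'\subset A,\ B'\subset B\\ |A'|=p,\ |B'|=q}}\mathcal{R}(A',B')\,\mathcal{R}(A\setminus A',B\setminus B')\,\frac{\mathcal{R}(x,A')\,\mathcal{R}(x,B')}{\mathcal{R}(A',A\setminus A')\,\mathcal{R}(B',B\setminus B')}.$$ Write $f=\sum_{i=0}^m f_ix^i$, $g=\sum_{i=0}^ng_ix^i$ with $f_i=g_i=0$ outside the natural ranges. For $d\le\min\{m,n\}$ if $m\ne n$, or $d<m=n$, the $d$-th subresultant $\operatorname{Sres}_d(f,g)(x)$ is the determinant of the $(m+n-2d)\times(m+n-2d)$ matrix with rows $x^jf(x)$ for $j=n-d-1,\dots,0$ followed by rows $x^jg(x)$ for $j=m-d-1,\dots,0$, where the row corresponding to a polynomial $h=x^jf$ or $x^jg$ has as its first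 $m+n-2d-1$ entries the coefficients of $x^{m+n-d-1},x^{m+n-d-2},\dots,x^{d+1}$ in $h$, and as last entry the polynomial $h(x)$ itself. *)

(* Defs.v *)
From HB Require Import structures.
From mathcomp Require Import all_boot all_order all_algebra.
Set Implicit Arguments. Unset Strict Implicit. Unset Printing Implicit Defensive.
Import GRing.Theory.
Local Open Scope ring_scope.

(* Finite sets A = {a_0..a_(m-1)} are given by injective families a : 'I_m -> K;
   subsets A' of A are encoded by index subsets I : {set 'I_m}. *)

Definition Rset (K : fieldType) (m n : nat) (a : 'I_m -> K) (b : 'I_n -> K)
  (I : {set 'I_m}) (J : {set 'I_n}) : K :=
  \prod_(i in I) \prod_(j in J) (a i - b j).

Definition Rx (K : fieldType) (m : nat) (a : 'I_m -> K) (I : {set 'I_m}) : {poly K} :=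
  \prod_(i in I) ('X - (a i)%:P).

Definition Syl (K : fieldType) (m n : nat) (a : 'I_m -> K) (b : 'I_n -> K)
  (p q : nat) : {poly K} :=
  \sum_(I : {set 'I_m} | #|I| == p) \sum_(J : {set 'I_n} | #|J| == q)
    ((Rset a b I J * Rset a b (~: I) (~: J))
       / (Rset a a I (~: I) * Rset b b J (~: J))) *: (Rx a I * Rx b J).

Definition Sres (K : fieldType) (d : nat) (f g : {poly K}) : {poly K} :=
  let m := (size f).-1 in
  let n := (size g).-1 in
  let N := (m + n - d.*2)%N in
  let h (i : nat) : {poly K} :=
    if (i < n - d)%N then 'X^(n - d - 1 - i) * f
    else 'X^(m - d - 1 - (i - (n - d))) * g in
  \det (\matrix_(i < N, j < N)
          (if (j < N - 1)%N then ((h i)`_(m + n - d - 1 - j))%:P else h i)).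

(* Main.v *)
Require Import Defs.
From HB Require Import structures.
From mathcomp Require Import all_boot all_order all_algebra.
From mathcomp Require Import ring zify fingroup perm.
Set Implicit Arguments. Unset Strict Implicit. Unset Printing Implicit Defensive.
Import GRing.Theory.
Local Open Scope ring_scope.


Section Gen.
Variable R : comNzRingType.

Definition mxN a (E : nat -> nat -> R) : 'M[R]_a := \matrix_(i < a, j < a) E i j.

Lemma mxN_ext a E E' : (forall i j, (i < a)%N -> (j < a)%N -> E i j = E' i j) ->
  mxN a E = mxN a E'.
Proof. by move=> H; apply/matrixP=> i j; rewrite !mxE H. Qed.

Lemma det_mxN_eq a b E : a = b -> \det (mxN a E) = \det (mxN b E).
Proof. by move->. Qed.

Lemma det_blk a b (A : 'M[R]_(a+b)) :
  (forall (i j : 'I_(a+b)), (i < a)%N -> (a <= j)%N -> A i j = 0) ->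
  \det A = \det (\matrix_(i<a,j<a) A (lshift b i) (lshift b j)) *
           \det (\matrix_(i<b,j<b) A (rshift a i) (rshift a j)).
Proof.
move=> H; rewrite -{1}[A]submxK.
have -> : ursubmx A = 0.
  by apply/matrixP=> i j; rewrite !mxE; apply: H => /=; [exact: ltn_ord|exact: leq_addr].
rewrite det_lblock; by congr (_ * _); congr (\det _); apply/matrixP=> i j; rewrite !mxE.
Qed.

Lemma det_blkU a b (A : 'M[R]_(a+b)) :
  (forall (i j : 'I_(a+b)), (a <= i)%N -> (j < a)%N -> A i j = 0) ->
  \det A = \det (\matrix_(i<a,j<a) A (lshift b i) (lshift b j)) *
           \det (\matrix_(i<b,j<b) A (rshift a i) (rshift a j)).
Proof.
move=> H; rewrite -{1}[A]submxK.
have -> : dlsubmx A = 0.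
  by apply/matrixP=> i j; rewrite !mxE; apply: H => /=; [exact: leq_addr|exact: ltn_ord].
rewrite det_ublock; by congr (_ * _); congr (\det _); apply/matrixP=> i j; rewrite !mxE.
Qed.

Lemma det_mxN_blk a b E :
  (forall i j, (i < a)%N -> (a <= j < a + b)%N -> E i j = 0) ->
  \det (mxN (a + b) E) = \det (mxN a E) * \det (mxN b (fun i j => E (a + i) (a + j))%N).
Proof.
move=> H; rewrite (@det_blk a b); last first.
  by move=> i j hi hj; rewrite mxE H // hj ltn_ord.
by congr (_ * _); congr (\det _); apply/matrixP=> i j; rewrite !mxE.
Qed.

Lemma det_mxN_blkU a b E :
  (forall i j, (a <= i < a + b)%N -> (j < a)%N -> E i j = 0) ->
  \det (mxN (a + b) E) = \det (mxN a E) * \det (mxN b (fun i j => E (a + i) (a + j))%N).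
Proof.
move=> H; rewrite (@det_blkU a b); last first.
  by move=> i j hi hj; rewrite mxE H // hi ltn_ord.
by congr (_ * _); congr (\det _); apply/matrixP=> i j; rewrite !mxE.
Qed.

Lemma det_mxN_tr a E : \det (mxN a E) = \det (mxN a (fun i j => E j i)).
Proof. by rewrite -det_tr; congr (\det _); apply/matrixP=> i j; rewrite !mxE. Qed.

Lemma key_lemma M (r : nat -> {poly R}) (psi1 psi2 : nat -> {poly R} -> R) :
  (forall i, (i < M)%N -> (size (r i) <= M)%N) ->
  (forall j (p : {poly R}), (size p <= M)%N -> psi1 j p = \sum_(e < M) p`_e * psi1 j 'X^e) ->
  (forall j (p : {poly R}), (size p <= M)%N -> psi2 j p = \sum_(e < M) p`_e * psi2 j 'X^e) ->
  \det (mxN M (fun i j => psi1 j (r i))) * \det (mxN M (fun i j => psi2 j 'X^i)) =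
  \det (mxN M (fun i j => psi2 j (r i))) * \det (mxN M (fun i j => psi1 j 'X^i)).
Proof.
move=> Hr H1 H2.
pose C := \matrix_(i < M, e < M) (r i)`_e.
have E (psi : nat -> {poly R} -> R) :
  (forall j (p : {poly R}), (size p <= M)%N -> psi j p = \sum_(e < M) p`_e * psi j 'X^e) ->
  mxN M (fun i j => psi j (r i)) = C *m mxN M (fun i j => psi j 'X^i).
  move=> Hp; apply/matrixP=> i j; rewrite !mxE Hp ?Hr //.
  by apply: eq_bigr => e _; rewrite !mxE.
rewrite (E _ H1) (E _ H2) !det_mulmx; ring.
Qed.

Lemma psi_coef M k (p : {poly R}) : (size p <= M)%N ->
  p`_k = \sum_(e < M) p`_e * ('X^e)`_k.
Proof.
move=> Hs; case: (ltnP k M) => hk.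
  rewrite (bigD1 (Ordinal hk)) //= coefXn eqxx mulr1 big1 ?addr0 // => e /negbTE he.
  by rewrite coefXn; case: eqP => [h|]; [move: he; rewrite -val_eqE /= h eqxx|rewrite mulr0].
rewrite nth_default ?(leq_trans Hs) // big1 // => e _.
by rewrite coefXn; case: eqP => [h|]; [move: (ltn_ord e); rewrite -h ltnNge hk|rewrite mulr0].
Qed.

Lemma psi_ev M a (p : {poly R}) : (size p <= M)%N ->
  p.[a] = \sum_(e < M) p`_e * ('X^e).[a].
Proof.
move=> Hs; rewrite (horner_coef_wide a Hs); apply: eq_bigr => e _.
by rewrite hornerXn.
Qed.

End Gen.


Section Sgn.
Variable R : comNzRingType.

Definition Rev a : 'M[R]_a := \matrix_(i < a, j < a) ((i + j)%N == a.-1)%:R.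

Lemma det_Rev a : \det (Rev a) = (-1) ^+ 'C(a, 2).
Proof.
elim: a => [|a IH]; first by rewrite det_mx00.
rewrite (expand_det_row _ ord0) (bigD1 ord_max) //= big1 ?addr0; last first.
  move=> j /negbTE hj; rewrite !mxE add0n /=.
  by case: eqP => [h|]; [move: hj; rewrite -val_eqE /= h eqxx|rewrite mul0r].
rewrite !mxE add0n eqxx mul1r /cofactor.
have -> : row' ord0 (col' ord_max (Rev a.+1)) = Rev a.
  apply/matrixP=> i j; rewrite !mxE /=.
  have hj : (j < a)%N := ltn_ord j.
  rewrite /bump /= leqNgt hj /= add0n add1n addSn.
  by case: a i j IH hj => [[]//|a] i j _ _ /=; rewrite eqSS.
by rewrite IH add0n -exprD binS bin1 addnC.
Qed.

Lemma Rev_mulE a (A : 'M[R]_a) : Rev a *m A = \matrix_(i, j) A (rev_ord i) j.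
Proof.
apply/matrixP=> i j; rewrite !mxE (bigD1 (rev_ord i)) //= big1 ?addr0.
  rewrite !mxE /=; have -> : (i + (a - i.+1))%N = a.-1.
    by have := ltn_ord i; lia.
  by rewrite eqxx mul1r.
move=> l /negbTE hl; rewrite !mxE.
case: eqP => [h|]; last by rewrite mul0r.
move: hl; rewrite -val_eqE /=; have := ltn_ord i; have := ltn_ord l.
move/eqP: h; lia.
Qed.

Lemma det_anti a (U : 'M[R]_a) :
  (forall i j : 'I_a, (a <= i + j)%N -> U i j = 0) ->
  (forall i j : 'I_a, (i + j)%N = a.-1 -> U i j = 1) ->
  \det U = (-1) ^+ 'C(a, 2).
Proof.
move=> H0 H1.
have : \det (Rev a *m U) = 1.
  rewrite Rev_mulE det_trig.
    apply: big1 => i _; rewrite !mxE H1 //=.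
    by have := ltn_ord i; lia.
  apply/is_trig_mxP=> i j hij; rewrite !mxE H0 //=.
  by have := ltn_ord i; lia.
rewrite det_mulmx det_Rev => h.
by rewrite -[\det U](signrMK (R:=R) 'C(a,2)) h mulr1.
Qed.

Lemma det_Vand_desc a (x : 'I_a -> R) :
  \det (\matrix_(i < a, j < a) x i ^+ (a.-1 - j)) =
  (-1) ^+ 'C(a, 2) * \prod_(i < a) \prod_(j < a | (i < j)%N) (x j - x i).
Proof.
rewrite -det_tr.
have -> : (\matrix_(i < a, j < a) x i ^+ (a.-1 - j))^T =
          Rev a *m Vandermonde a (\row_(j < a) x j).
  rewrite Rev_mulE; apply/matrixP=> i j; rewrite !mxE //=.
  by congr (_ ^+ _); lia.
by rewrite det_mulmx det_Rev det_Vandermonde; congr (_ * _);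
   apply: eq_bigr => i _; apply: eq_bigr => j _; rewrite !mxE.
Qed.

Lemma binD2 a b : 'C(a + b, 2) = ('C(a, 2) + 'C(b, 2) + a * b)%N.
Proof.
elim: b => [|b IH]; first by rewrite addn0 bin0n ?muln0 ?addn0.
by rewrite addnS binS IH bin1 binS bin1 mulnS; ring.
Qed.

End Sgn.


Section Lap.
Variable R : comNzRingType.

Lemma det_sum_rows n (A B : 'M[R]_n) :
  \det (A + B) = \sum_(phi : {ffun 'I_n -> bool})
     \det (\matrix_(i, j) if phi i then A i j else B i j).
Proof.
rewrite /determinant.
transitivity (\sum_(s : 'S_n) \sum_(phi : {ffun 'I_n -> bool})
  (-1) ^+ s * \prod_i (if phi i then A i (s i) else B i (s i))).
  apply: eq_bigr => s _; rewrite -mulr_sumr; congr (_ * _).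
  rewrite -(bigA_distr_bigA (fun i (b : bool) => if b then A i (s i) else B i (s i))).
  by apply: eq_bigr => i _; rewrite big_bool /= !mxE addrC.
rewrite exchange_big /=; apply: eq_bigr => phi _; apply: eq_bigr => s _.
by congr (_ * _); apply: eq_bigr => i _; rewrite !mxE.
Qed.


Definition NJ d p (J : {set 'I_(d + p)}) (w v : 'I_(d + p) -> nat -> R) : 'M[R]_(d + p) :=
  \matrix_(k, j) if k \in J then (if (j < d)%N then w k j else 0)
                 else (if (j < d)%N then 0 else v k (j - d)%N).

Lemma NJ_zero d p (J : {set 'I_(d + p)}) (w v : 'I_(d + p) -> nat -> R) : #|J| != d -> \det (@NJ d p J w v) = 0.
Proof.
move=> hJ; set N := NJ J w v.
pose N2 := map_mx (@polyC R) N.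
pose Dc := diag_mx (\row_(j < d + p) (if (j < d)%N then 'X else 1 : {poly R})).
pose Dr := diag_mx (\row_(k < d + p) (if k \in J then 'X else 1 : {poly R})).
have E : N2 *m Dc = Dr *m N2.
  apply/matrixP=> k j; rewrite mul_mx_diag mul_diag_mx !mxE.
  by case: (k \in J); case: (j < d)%N; rewrite ?rmorph0 ?mulr0 ?mul0r ?mulr1 ?mul1r // mulrC.
have := congr1 determinant E; rewrite !det_mulmx !det_diag det_map_mx.
have -> : \prod_(i < d + p) (\row_(j < d + p) (if (j < d)%N then 'X else 1 : {poly R})) 0 i = 'X^d.
  rewrite big_split_ord /= [X in _ * X]big1 ?mulr1; last first.
    by move=> i _; rewrite !mxE /= ltnNge leq_addr.
  rewrite (eq_bigr (fun _ => 'X)) ?prodr_const ?card_ord // => i _.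
  by rewrite !mxE /= ltn_ord.
have -> : \prod_(i < d + p) (\row_(k < d + p) (if k \in J then 'X else 1 : {poly R})) 0 i = 'X^#|J|.
  rewrite (eq_bigr (fun i => if i \in J then 'X else 1)); last by move=> i _; rewrite !mxE.
  by rewrite -big_mkcond prodr_const.
move/(congr1 (fun P : {poly R} => P`_d)).
move=> h; have {h} : ((\det N)%:P * 'X^d)`_d = ('X^#|J| * (\det N)%:P)`_d by exact: h.
rewrite coefCM coefXn eqxx mulr1 mulrC coefCM coefXn.
by rewrite eq_sym (negbTE hJ) mulr0.
Qed.

Lemma laplace_split d p (y c : 'I_(d + p) -> R) (w v : 'I_(d + p) -> nat -> R) :
  \det (\matrix_(k, j) if (j < d)%N then y k * w k j else c k * v k (j - d)%N) =
  \sum_(J : {set 'I_(d + p)} | #|J| == d)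
     (\prod_(k in J) y k) * (\prod_(k in ~: J) c k) * \det (NJ J w v).
Proof.
pose A : 'M[R]_(d + p) := \matrix_(k, j) if (j < d)%N then y k * w k j else 0.
pose B : 'M[R]_(d + p) := \matrix_(k, j) if (j < d)%N then 0 else c k * v k (j - d)%N.
have -> : \matrix_(k, j) (if (j < d)%N then y k * w k j else c k * v k (j - d)%N) = A + B.
  by apply/matrixP=> k j; rewrite !mxE; case: (j < d)%N; rewrite ?addr0 ?add0r.
rewrite det_sum_rows.
pose g (J : {set 'I_(d + p)}) : {ffun 'I_(d + p) -> bool} := [ffun k => k \in J].
have gbij : bijective g.
  exists (fun phi : {ffun 'I_(d + p) -> bool} => [set k | phi k]).
    by move=> J; apply/setP=> k; rewrite inE ffunE.
  by move=> phi; apply/ffunP=> k; rewrite ffunE inE.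
rewrite (reindex g) /=; last by apply: onW_bij.
rewrite [RHS]big_mkcond /=; apply: eq_bigr => J _.
have -> : \matrix_(i, j) (if g J i then A i j else B i j) =
   diag_mx (\row_k (if k \in J then y k else c k)) *m NJ J w v.
  apply/matrixP=> k j; rewrite mul_diag_mx !mxE ffunE.
  by case: (k \in J); case: (j < d)%N; rewrite ?mulr0.
rewrite det_mulmx det_diag.
have -> : \prod_i (\row_k (if k \in J then y k else c k)) 0 i =
          (\prod_(k in J) y k) * (\prod_(k in ~: J) c k).
  rewrite (bigID (fun k => k \in J)) /=; congr (_ * _); apply: eq_big => k //.
  - by move=> hk; rewrite !mxE hk.
  - by rewrite inE.
  - by move=> /negbTE hk; rewrite !mxE hk.
case: eqP => [//|/eqP hJ]; by rewrite NJ_zero // mulr0.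
Qed.

End Lap.


Lemma perm_split n d (J : {set 'I_n}) : #|J| = d ->
  exists s : 'S_n, forall i : 'I_n, (s i \in J) = (i < d)%N.
Proof.
move=> hJ; pose sq := enum J ++ enum (~: J).
have ssq : size sq = n by rewrite size_cat -!cardE cardsC card_ord.
have usq : uniq sq.
  rewrite cat_uniq !enum_uniq /= andbT; apply/hasPn => x; rewrite !mem_enum inE.
  by move=> /negbTE ->.
pose F (i : 'I_n) := nth i sq i.
have Finj : injective F.
  move=> i j; rewrite /F (set_nth_default i j) ?ssq //.
  by move/eqP; rewrite nth_uniq ?ssq // => /eqP /val_inj.
exists (perm Finj) => i; rewrite permE /F nth_cat -cardE hJ.
case: ifP => hi.
  by rewrite -mem_enum mem_nth // -cardE hJ.
have : nth i (enum (~: J)) (i - d) \in enum (~: J).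
  have hc : #|~: J| = (n - d)%N by have := cardsC J; rewrite hJ card_ord; lia.
  by rewrite mem_nth // -cardE hc; have := ltn_ord i; move: hi; lia.
by rewrite mem_enum inE => /negbTE.
Qed.

Section NJd.
Variable R : comNzRingType.

Lemma NJ_det d p (bb : 'I_(d + p) -> R) (J : {set 'I_(d + p)}) : #|J| = d ->
  \det (NJ J (fun k j => bb k ^+ j) (fun k j => bb k ^+ (p.-1 - j))) *
  \prod_(k in ~: J) \prod_(l in J) (bb k - bb l) =
  (-1) ^+ 'C(p, 2) * \prod_(i < d + p) \prod_(j < d + p | (i < j)%N) (bb j - bb i).
Proof.
move=> hJ; have [s hs] := perm_split hJ.
set N := NJ _ _ _.
have prl (F : 'I_(d + p) -> R) : \prod_(i < d) F (s (lshift p i)) = \prod_(k in J) F k.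
  rewrite [RHS](reindex_inj (@perm_inj _ s)) /= (eq_bigl (fun i : 'I_(d + p) => (i < d)%N)).
    rewrite big_split_ord /= [X in _ * X]big_pred0 ?mulr1; last by move=> i; rewrite ltnNge leq_addr.
    by apply: eq_bigl => i; rewrite ltn_ord.
  by move=> i; rewrite hs.
have prr (F : 'I_(d + p) -> R) : \prod_(i < p) F (s (rshift d i)) = \prod_(k in ~: J) F k.
  rewrite [RHS](reindex_inj (@perm_inj _ s)) /= (eq_bigl (fun i : 'I_(d + p) => ~~ (i < d)%N)).
    rewrite big_split_ord /= [X in X * _]big_pred0 ?mul1r; last by move=> i; rewrite ltn_ord.
    by apply: eq_bigl => i; rewrite ltnNge leq_addr.
  by move=> i; rewrite inE hs.
have h1 : (-1) ^+ s * \det N =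
   \det (\matrix_(i < d, j < d) bb (s (lshift p i)) ^+ j) *
   \det (\matrix_(i < p, j < p) bb (s (rshift d i)) ^+ (p.-1 - j)).
  rewrite -det_perm -det_mulmx -row_permE (det_blk (a:=d) (b:=p)).
    congr (_ * _); congr (\det _); apply/matrixP => i j; rewrite !mxE hs /=.
      by rewrite !ltn_ord.
    by rewrite ltnNge leq_addr /= ltnNge leq_addr /= addKn.
  by move=> i j hi hj; rewrite !mxE hs hi /= ltnNge hj.
have h2 : \prod_(i < d + p) \prod_(j < d + p | (i < j)%N) (bb (s j) - bb (s i)) =
          (-1) ^+ s * \prod_(i < d + p) \prod_(j < d + p | (i < j)%N) (bb j - bb i).
  have e1 : \prod_(i < d + p) \prod_(j < d + p | (i < j)%N) (bb (s j) - bb (s i)) =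
            \det (Vandermonde (d + p) (\row_j bb (s j))).
    by rewrite det_Vandermonde; apply: eq_bigr => i _; apply: eq_bigr => j _; rewrite !mxE.
  rewrite e1; have -> : Vandermonde (d + p) (\row_j bb (s j)) = col_perm s (Vandermonde (d + p) (\row_j bb j)).
    by apply/matrixP=> i j; rewrite !mxE.
  rewrite col_permE det_mulmx det_perm odd_permV det_Vandermonde mulrC; congr (_ * _).
  by apply: eq_bigr => i _; apply: eq_bigr => j _; rewrite !mxE.
have h3 : \prod_(i < d + p) \prod_(j < d + p | (i < j)%N) (bb (s j) - bb (s i)) =
  \prod_(i < d) \prod_(j < d | (i < j)%N) (bb (s (lshift p j)) - bb (s (lshift p i))) *
  \prod_(i < d) \prod_(j < p) (bb (s (rshift d j)) - bb (s (lshift p i))) *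
  \prod_(i < p) \prod_(j < p | (i < j)%N) (bb (s (rshift d j)) - bb (s (rshift d i))).
  rewrite big_split_ord /= -big_split /=; congr (_ * _).
    apply: eq_bigr => i _; rewrite big_split_ord /=; congr (_ * _).
    by apply: eq_bigl => j /=; rewrite (leq_trans (ltn_ord i)) ?leq_addr.
  apply: eq_bigr => i _; rewrite big_split_ord /= big_pred0 ?mul1r.
    by apply: eq_bigl => j /=; rewrite ltn_add2l.
  by move=> j /=; rewrite ltnNge (leq_trans (ltnW (ltn_ord j))) ?leq_addr.
have h4 : \prod_(i < d) \prod_(j < p) (bb (s (rshift d j)) - bb (s (lshift p i))) =
          \prod_(k in ~: J) \prod_(l in J) (bb k - bb l).
  rewrite (prl (fun l => \prod_(j < p) (bb (s (rshift d j)) - bb l))) exchange_big /=.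
  by rewrite (prr (fun k => \prod_(l in J) (bb k - bb l))).
have detW : \det (\matrix_(i < d, j < d) bb (s (lshift p i)) ^+ j) =
   \prod_(i < d) \prod_(j < d | (i < j)%N) (bb (s (lshift p j)) - bb (s (lshift p i))).
  rewrite -det_tr.
  have -> : (\matrix_(i < d, j < d) bb (s (lshift p i)) ^+ j)^T =
          Vandermonde d (\row_j bb (s (lshift p j))) by apply/matrixP=> i j; rewrite !mxE.
  by rewrite det_Vandermonde; apply: eq_bigr => i _; apply: eq_bigr => j _; rewrite !mxE.
move: h1; rewrite detW (det_Vand_desc (fun i => bb (s (rshift d i)))).
move=> h1; have {}h1 := congr1 (fun x => (-1) ^+ s * x) h1; rewrite /= signrMK in h1.
rewrite h1 -h4; move: h2; rewrite h3 => h2.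
have {}h2 := congr1 (fun x => (-1) ^+ s * x) h2; rewrite /= signrMK in h2.
rewrite -h2.
set W := \prod_(i < d) _.
set V2 := \prod_(i < p) _.
set Mx := \prod_(i < d) _.
move: ((-1) ^+ s) ((-1) ^+ 'C(p, 2)) W V2 Mx => a b c e f.
ring.
Qed.
End NJd.


Lemma size_prodX (K : fieldType) k (a : 'I_k -> K) :
  size (\prod_(i < k) ('X - (a i)%:P)) = k.+1.
Proof.
rewrite size_prod => [|i _]; last by rewrite polyXsubC_eq0.
rewrite (eq_bigr (fun _ => 2%N)) => [|i _]; last by rewrite size_XsubC.
rewrite sum_nat_const card_ord; lia.
Qed.

Lemma map_polyC_hornerX (K : fieldType) (h : {poly K}) : (h ^:P).['X] = h.
Proof.
rewrite horner_coef size_map_polyC.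
apply: (@etrans _ _ (\sum_(i < size h) h`_i *: 'X^i)); last by rewrite -poly_def coefK.
by apply: eq_bigr => i _; rewrite coef_map /= mul_polyC.
Qed.

Lemma sgn_lemma (R : comNzRingType) d p q : (0 < p)%N ->
  (-1) ^+ 'C(q, 2) * ((-1) ^+ (d + p + q).-1 * (-1) ^+ 'C((p + q).-1, 2)) *
  (-1) ^+ 'C(p, 2) * (-1) ^+ d * (-1) ^+ ((d + q) * p) = (-1) ^+ (p * d) :> R.
Proof.
move=> hp; rewrite -!exprD -signr_odd -[RHS]signr_odd; congr (_ ^+ _).
have h1 : ('C((p + q).-1, 2) + (p + q).-1 = 'C(p, 2) + 'C(q, 2) + p * q)%N.
  rewrite -binD2; have -> : (p + q = ((p + q).-1).+1)%N by lia.
  by rewrite binS bin1 /=.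
have E : ('C(q, 2) + ((d + p + q).-1 + 'C((p + q).-1, 2)) + 'C(p, 2) + d + (d + q) * p =
          p * d + 2 * ('C(q, 2) + 'C(p, 2) + d + p * q))%N.
  move: h1; set a := 'C(_, 2); set b := 'C(p, 2); set c := 'C(q, 2); nia.
by rewrite E oddD oddM (oddM 2) /= addbF.
Qed.

Lemma ring_aux1 (R : comNzRingType) (a b c e : R) : a * b * c * e = a * e * b * c.
Proof. ring. Qed.
Lemma ring_aux2 (R : comNzRingType) (y c D sq s12 Mx : R) :
  y * c * D * sq * s12 * Mx = y * c * sq * s12 * (D * Mx).
Proof. ring. Qed.
Lemma ring_aux3 (R : comNzRingType) (sq sM sN sp sd sm RA Rx VB : R) :
  sq * (sM * sN) * sp * sd * sm * RA * Rx * VB = sd * Rx * (sm * RA) * sq * (sM * sN) * (sp * VB).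
Proof. ring. Qed.

Section Main.
Variable K : fieldType.
Variables d p q : nat.
Hypothesis hp : (0 < p)%N.
Variable alpha : 'I_(d + q) -> K.
Variable beta : 'I_(d + p) -> K.
Hypothesis inj_beta : injective beta.

Definition fP : {poly K} := \prod_(i < d + q) ('X - (alpha i)%:P).
Definition gP : {poly K} := \prod_(j < d + p) ('X - (beta j)%:P).
Definition xR : {poly K} := 'X.
Definition bN (k : nat) : K := if insub k is Some i then beta i else 0.

Lemma bN_val (i : 'I_(d + p)) : bN i = beta i.
Proof. by rewrite /bN valK. Qed.

Definition rT (e : nat) : {poly {poly K}} := ('X - xR%:P) * 'X^e.
Definition rr (e : nat) : {poly {poly K}} :=
  if (e < d)%N then rT e
  else if (e < d + p)%N then ('X^(p.-1 - (e - d)) * fP) ^:P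
  else ('X^(q.-1 - (e - d - p)) * gP) ^:P.
Definition coefp (k : nat) (P : {poly {poly K}}) : {poly K} := P`_k.
Definition evp (a : {poly K}) (P : {poly {poly K}}) : {poly K} := P.[a].
Definition psi1 (j : nat) :=
  if (j < d)%N then coefp j.+1
  else if (j < (d + p + q).-1)%N then coefp ((d + p + q).-1 - (j - d)) else evp xR.
Definition psi2 (j : nat) :=
  if (j < d + p)%N then evp (bN j)%:P else coefp j.

Lemma size_fP : size fP = (d + q).+1. Proof. exact: size_prodX. Qed.
Lemma size_gP : size gP = (d + p).+1. Proof. exact: size_prodX. Qed.
Lemma gP_top : gP`_(d + p) = 1.
Proof.
have := monic_prod_XsubC (index_enum 'I_(d + p)) predT beta.
by rewrite monicE /lead_coef -/gP size_gP => /eqP.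
Qed.
Lemma gP_root (k : 'I_(d + p)) : gP.[beta k] = 0.
Proof.
rewrite /gP horner_prod (bigD1 k) //= hornerXsubC subrr mul0r //.
Qed.
Lemma fP_ev (k : 'I_(d + p)) : fP.[beta k] = \prod_(i < d + q) (beta k - alpha i).
Proof. by rewrite /fP horner_prod; apply: eq_bigr => i _; rewrite hornerXsubC. Qed.

Lemma size_rr e : (e < d + p + q)%N -> (size (rr e) <= d + p + q)%N.
Proof.
move=> he; rewrite /rr /rT; case: ifP => h1.
  rewrite (leq_trans (size_mul_leq _ _)) // size_XsubC size_polyXn; lia.
case: ifP => h2; rewrite size_map_polyC.
  rewrite (leq_trans (size_mul_leq _ _)) // size_polyXn size_fP; lia.
rewrite (leq_trans (size_mul_leq _ _)) // size_polyXn size_gP; lia.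
Qed.

Lemma psi1_dec j (P : {poly {poly K}}) : (size P <= d + p + q)%N ->
  psi1 j P = \sum_(e < d + p + q) P`_e * psi1 j 'X^e.
Proof.
move=> hs; rewrite /psi1; case: ifP => _; last case: ifP => _.
- exact: psi_coef.
- exact: psi_coef.
- exact: psi_ev.
Qed.

Lemma psi2_dec j (P : {poly {poly K}}) : (size P <= d + p + q)%N ->
  psi2 j P = \sum_(e < d + p + q) P`_e * psi2 j 'X^e.
Proof.
move=> hs; rewrite /psi2; case: ifP => _.
- exact: psi_ev.
- exact: psi_coef.
Qed.


Lemma Sres_eq : Sres d fP gP = \det (mxN (p + q) (fun i j =>
   if (j < (p + q).-1)%N then
     ((if (i < p)%N then 'X^(p.-1 - i) * fP else 'X^(q.-1 - (i - p)) * gP)`_((d + p + q).-1 - j))%:P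
   else (if (i < p)%N then 'X^(p.-1 - i) * fP else 'X^(q.-1 - (i - p)) * gP))).
Proof.
rewrite /Sres size_fP size_gP /=.
have e1 : (d + q + (d + p) - d.*2 = p + q)%N by rewrite -addnn; lia.
have e2 : (d + q + (d + p) - d - 1 = (d + p + q).-1)%N by lia.
rewrite e1 e2 !addKn !subn1 /mxN.
by [].
Qed.


Lemma coef_rT e k : (rT e)`_k = (k == e.+1)%:R - xR * (k == e)%:R.
Proof. by rewrite /rT mulrBl coefB -exprS coefXn coefCM coefXn. Qed.

Lemma ev_rT e : (rT e).[xR] = 0.
Proof. by rewrite /rT hornerM hornerXsubC subrr mul0r. Qed.

Lemma detPsi1 : \det (mxN (d + p + q) (fun i j => psi1 j (rr i))) = Sres d fP gP.
Proof.
rewrite Sres_eq (det_mxN_eq _ (esym (addnA d p q))) det_mxN_blk; last first.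
  move=> i j hi hj; rewrite /psi1 /rr hi ltnNge; move: hj => /andP [hj1 hj2]; rewrite hj1 /=.
  case: ifP => hj3.
    by rewrite /coefp coef_rT; do 2 (case: eqP; [lia|move=> _]); rewrite mulr0 subr0.
  by rewrite /evp ev_rT.
rewrite [X in X * _](_ : _ = 1) ?mul1r; last first.
  rewrite det_trig; last first.
    apply/is_trig_mxP=> i j hij; rewrite mxE /psi1 /rr !ltn_ord /coefp coef_rT.
    by do 2 (case: eqP; [lia|move=> _]); rewrite mulr0 subr0.
  by apply: big1 => i _; rewrite mxE /psi1 /rr !ltn_ord /coefp coef_rT eqxx; case: eqP; [lia|rewrite mulr0 subr0].
congr (\det _); apply: mxN_ext => i j hi hj.
rewrite /psi1 /rr !ltnNge !leq_addr /= !addKn -!ltnNge.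
have -> : (d + j < (d + p + q).-1)%N = (j < (p + q).-1)%N by lia.
have -> : (d + i < d + p)%N = (i < p)%N by lia.
case: ifP => hj'; case: ifP => hi'; rewrite /coefp /evp ?coef_map //= map_polyC_hornerX //.
Qed.


Definition VB : {poly K} :=
  \prod_(i < d + p) \prod_(j < d + p | (i < j)%N) ((beta j)%:P - (beta i)%:P).

Lemma detPhi2 : \det (mxN (d + p + q) (fun i j => psi2 j 'X^i)) = VB.
Proof.
rewrite det_mxN_blk; last first.
  move=> i j hi /andP [hj _]; rewrite /psi2 ltnNge hj /= /coefp coefXn.
  by case: eqP => // e; move: hi; rewrite -e ltnNge hj.
have -> : mxN q (fun i j => psi2 (d + p + j) 'X^(d + p + i)) = 1%:M.
  apply/matrixP=> i j; rewrite !mxE /psi2 ltnNge leq_addr /= /coefp coefXn.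
  by rewrite eqn_add2l eq_sym.
rewrite det1 mulr1.
have -> : mxN (d + p) (fun i j => psi2 j 'X^i) = Vandermonde (d + p) (\row_j (beta j)%:P).
  by apply/matrixP=> i j; rewrite !mxE /psi2 ltn_ord /evp hornerXn bN_val.
by rewrite det_Vandermonde /VB; apply: eq_bigr => i _; apply: eq_bigr => j _; rewrite !mxE.
Qed.



Lemma gP_rootN j : (j < d + p)%N -> gP.[bN j] = 0.
Proof. by move=> hj; have := bN_val (Ordinal hj) => /= ->; exact: gP_root. Qed.

Lemma detPsi2 : \det (mxN (d + p + q) (fun i j => psi2 j (rr i))) =
  \det (mxN (d + p) (fun i j => psi2 j (rr i))) * (-1) ^+ 'C(q, 2).
Proof.
rewrite det_mxN_blkU; last first.
  move=> i j /andP [hi1 hi2] hj; rewrite /psi2 hj /rr !ltnNge hi1 (leq_trans (leq_addr p d) hi1) /=.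
  by rewrite /evp horner_map hornerM gP_rootN // mulr0.
congr (_ * _); apply: det_anti => i t hit; rewrite !mxE /psi2 ltnNge leq_addr /=.
- rewrite /rr ltnNge (leq_trans (leq_addr p d)) ?leq_addr //= ltnNge leq_addr /=.
  rewrite /coefp coef_map /= coefXnM; case: ifP => // _.
  rewrite nth_default ?size_gP //; have := ltn_ord i; lia.
- rewrite /rr ltnNge (leq_trans (leq_addr p d)) ?leq_addr //= ltnNge leq_addr /=.
  rewrite /coefp coef_map /= coefXnM; case: ifP => [|_]; first lia.
  have -> : (d + p + t - (q.-1 - (d + p + i - d - p)) = d + p)%N.
    by have := ltn_ord i; lia.
  by rewrite gP_top.
Qed.


Lemma detPhi1 : \det (mxN (d + p + q) (fun i j => psi1 j 'X^i)) =
  (-1) ^+ (d + p + q).-1 * (-1) ^+ 'C((p + q).-1, 2).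
Proof.
have [M1 eM] : exists M1, (d + p + q)%N = M1.+1 by exists (d + p + q).-1; lia.
rewrite (det_mxN_eq _ eM) [in RHS]eM /=.
have psi1E j : psi1 j = if (j < d)%N then coefp j.+1 else if (j < M1)%N then coefp (M1 - (j - d)) else evp xR.
  by rewrite /psi1 eM.
rewrite (expand_det_row _ ord0) (bigD1 ord_max) //= big1 ?addr0; last first.
  move=> j hj; rewrite !mxE /= psi1E /coefp.
  have hjM : (j < M1)%N.
    have hj2 : (val j != M1) by move: hj; rewrite -val_eqE.
    by rewrite ltn_neqAle hj2 -ltnS ltn_ord.
  case: ifP => h1; first by rewrite coefXn mul0r.
  by rewrite hjM coefXn; case: eqP => [|_]; [lia|rewrite mul0r].
rewrite !mxE psi1E /= ifF; last by lia.
rewrite ltnn /evp expr0 hornerC mul1r /cofactor add0n.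
congr (_ * _).
have -> : row' ord0 (col' ord_max (mxN M1.+1 (fun i j => psi1 j 'X^i))) =
          mxN M1 (fun i j => psi1 j 'X^(i.+1)).
  apply/matrixP=> i j; rewrite !mxE /=.
  by rewrite /bump leqNgt ltn_ord.
have eM1 : M1 = (d + (p + q).-1)%N by lia.
rewrite (det_mxN_eq _ eM1) det_mxN_blk; last first.
  move=> i j hi /andP [hj1 hj2]; rewrite psi1E ltnNge hj1 /=.
  rewrite ifT; last by lia.
  by rewrite /coefp coefXn; case: eqP => //; lia.
have -> : mxN d (fun i j => psi1 j 'X^(i.+1)) = 1%:M.
  apply/matrixP=> i j; rewrite !mxE psi1E ltn_ord /coefp coefXn.
  by rewrite eqSS eq_sym.
rewrite det1 mul1r -det_Rev; congr (\det _); apply/matrixP=> i j; rewrite !mxE.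
rewrite psi1E ltnNge leq_addr /= ifT; last by have := ltn_ord j; lia.
rewrite /coefp coefXn addKn.
have := ltn_ord i; have := ltn_ord j => hj hi.
by congr (_%:R); apply/eqP/eqP; lia.
Qed.


Definition NJb (J : {set 'I_(d + p)}) :=
  NJ J (fun k j => (beta k)%:P ^+ j) (fun k j => (beta k)%:P ^+ (p.-1 - j)).

Lemma detD : \det (mxN (d + p) (fun i j => psi2 j (rr i))) =
  \sum_(J : {set 'I_(d + p)} | #|J| == d)
     (\prod_(k in J) ((beta k)%:P - xR)) * (\prod_(k in ~: J) (fP.[beta k])%:P) * \det (NJb J).
Proof.
rewrite det_mxN_tr /NJb -laplace_split; congr (\det _); apply/matrixP=> k j; rewrite !mxE.
rewrite /psi2 ltn_ord /rr bN_val /evp; case: ifP => hj.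
  by rewrite /rT hornerM hornerXsubC hornerXn.
rewrite ltn_ord horner_map /= hornerM hornerXn rmorphM rmorphXn /= mulrC.
by [].
Qed.


Lemma cardCJ (J : {set 'I_(d + p)}) : #|J| = d -> #|~: J| = p.
Proof. by move=> hJ; have := cardsC J; rewrite hJ card_ord; lia. Qed.

Lemma Rx_sign (J : {set 'I_(d + p)}) : #|J| = d ->
  \prod_(k in J) ((beta k)%:P - xR) = (-1) ^+ d * Rx beta J.
Proof.
move=> hJ; rewrite /Rx (eq_bigr (fun k => - ('X - (beta k)%:P))) ?prodrN ?hJ // => k _.
by rewrite opprB.
Qed.

Lemma fprod (J : {set 'I_(d + p)}) : #|J| = d ->
  \prod_(k in ~: J) (fP.[beta k])%:P = ((-1) ^+ ((d + q) * p) * Rset alpha beta setT (~: J))%:P.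
Proof.
move=> hJ; rewrite -rmorph_prod; congr (_%:P).
rewrite (eq_bigr (fun k => (-1) ^+ (d + q) * \prod_(i < d + q) (alpha i - beta k))); last first.
  move=> k _; rewrite fP_ev (eq_bigr (fun i => - (alpha i - beta k))) ?prodrN ?cardT ?size_enum_ord //.
  by move=> i _; rewrite opprB.
rewrite big_split /= prodr_const cardCJ // -exprM /Rset exchange_big /=.
by congr (_ * _); apply: eq_bigl => i; rewrite in_setT.
Qed.

Lemma RJswap (J : {set 'I_(d + p)}) : #|J| = d ->
  \prod_(k in ~: J) \prod_(l in J) (beta k - beta l) = (-1) ^+ (p * d) * Rset beta beta J (~: J).
Proof.
move=> hJ; rewrite exchange_big /=.
rewrite (eq_bigr (fun l => (-1) ^+ p * \prod_(k in ~: J) (beta l - beta k))); last first.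
  move=> l _; rewrite (eq_bigr (fun k => - (beta l - beta k))) ?prodrN ?cardCJ // => k _.
  by rewrite opprB.
by rewrite big_split /= prodr_const hJ -exprM.
Qed.

Lemma RJ_neq0 (J : {set 'I_(d + p)}) : Rset beta beta J (~: J) != 0.
Proof.
apply/prodf_neq0 => k hk; apply/prodf_neq0 => l hl.
rewrite subr_eq0 (inj_eq inj_beta); apply/eqP => e; move: hl; rewrite inE -e hk.
by [].
Qed.

Lemma VB_neq0 : VB != 0.
Proof.
apply/prodf_neq0 => i _; apply/prodf_neq0 => j hij.
rewrite subr_eq0 (inj_eq polyC_inj) (inj_eq inj_beta); apply/eqP => e; move: hij; rewrite e ltnn.
by [].
Qed.

Lemma main_eq : Syl alpha beta 0 d = Sres d fP gP.
Proof.
have key := key_lemma size_rr psi1_dec psi2_dec.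
rewrite detPsi1 detPhi2 detPsi2 detPhi1 detD in key.
apply: (mulIf VB_neq0); rewrite /= key.
rewrite /Syl (big_pred1 set0) => [|I]; last by rewrite cards_eq0.
rewrite !mulr_suml; apply: eq_bigr => J /eqP hJ.
have r0 (X : {set 'I_(d + p)}) : Rset alpha beta set0 X = 1 by rewrite /Rset big_set0.
have r1 : Rset alpha alpha set0 (~: set0) = 1 by rewrite /Rset big_set0.
have r2 : Rx alpha set0 = 1 by rewrite /Rx big_set0.
rewrite r0 r1 r2 setC0 !mul1r.
set Mix := \prod_(k in ~: J) \prod_(l in J) ((beta k)%:P - (beta l)%:P).
have e4 : Mix = ((-1) ^+ (p * d) * Rset beta beta J (~: J))%:P.
  rewrite -(RJswap hJ) rmorph_prod; apply: eq_bigr => k _.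
  by rewrite rmorph_prod; apply: eq_bigr => l _; rewrite rmorphB.
have Mix_neq0 : Mix != 0.
  by rewrite e4 polyC_eq0 mulf_neq0 ?signr_eq0 ?RJ_neq0.
apply: (mulIf Mix_neq0).
have e3 := NJ_det (fun k => (beta k)%:P) hJ; rewrite -/Mix -/VB in e3.
rewrite -/(NJb J) in e3.
set RA := Rset alpha beta [set: 'I_(d + q)] (~: J).
set RJ := Rset beta beta J (~: J).
have eK : RA / RJ * ((-1) ^+ (p * d) * RJ) = (-1) ^+ (p * d) * RA.
  by field; exact: RJ_neq0.
transitivity ((-1) ^+ (p * d) * RA%:P * Rx beta J * VB).
  rewrite e4 -mul_polyC.
  rewrite (ring_aux1 (RA / RJ)%:P (Rx beta J) VB ((-1) ^+ (p * d) * RJ)%:P).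
  by rewrite -rmorphM eK rmorphM rmorph_sign.
rewrite ring_aux2 e3 (Rx_sign hJ) (fprod hJ) rmorphM rmorph_sign.
rewrite -(sgn_lemma _ d q hp); apply: ring_aux3.
Qed.

End Main.


Unset Implicit Arguments.

Theorem proposition2p9 (K : fieldType) (m n : nat)
  (alpha : 'I_m -> K) (beta : 'I_n -> K)
  (inj_alpha : injective alpha) (inj_beta : injective beta)
  (d : nat) (hdn : (d <= n - 1)%N) (hdm : (d <= m)%N) (hn : (0 < n)%N) :
  Syl alpha beta 0 d =
  Sres d (\prod_(i < m) ('X - (alpha i)%:P)) (\prod_(j < n) ('X - (beta j)%:P)).
Proof.
have [p En] : exists p, n = (d + p)%N by exists (n - d)%N; lia.
have [q Em] : exists q, m = (d + q)%N by exists (m - d)%N; lia.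
subst n m.
have hp : (0 < p)%N by lia.
exact: (@main_eq K d p q hp alpha beta inj_beta).
Qed.
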